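(* Let $\alpha,\beta,\gamma,\delta$ be non-negative integers with $\alpha<\gamma$ and $\delta<\beta$, and let $a,a',b,b',c,c',d,d'$ be non-negative integers with $a,a'\le\alpha$, $b,b'\le\beta$, $c,c'\le\gamma$, $d,d'\le\delta$. Consider the mixed polynomial $$ g(z_1,z_2,\bar z_1,\bar z_2)= z_1^{a}\bar z_1^{\alpha-a}z_2^{b}\bar z_2^{\beta-b}- z_1^{a'}\bar z_1^{\alpha-a'}z_2^{b'}\bar z_2^{\beta-b'}+ z_1^{c}\bar z_1^{\gamma-c}z_2^{d}\bar z_2^{\delta-d}+ z_1^{c'}\bar z_1^{\gamma-c'}z_2^{d'}\bar z_2^{\delta-d'} . $$ Let $P={}^t(p_1,p_2)$ be a strictly positive integer weight vector and $Q={}^t(q_1,q_2)\neq \mathbf 0$ a weight vector with $q_1,q_2\ge 0$. Assume: (1) $p_1(\gamma-\alpha)+p_2(\delta-\beta)=0$; (2) $a-a'=q_2k$ and $b-b'=-q_1k$ for some non-zero integer $k$; (3) $(a-a',\,b-b')=(c-c',\,d-d')$; (4) $(2(a-c)-\alpha+\gamma,\ 2(b-d)-\beta+\delta)=\pm(a-a',\,b-b')$; (5) $q_1(2a-\alpha)+q_2(2b-\beta)\neq 0$. Then $g$ is a mixed weighted homogeneous polynomial, radially weighted homogeneous with respect to $P$ of radial degree $d_r=p_1\alpha+p_2\beta=p_1\gamma+p_2\delta>0$ and polar weighted homogeneous with respect to $Q$ of polar degree $d_p=q_1(2a-\alpha)+q_2(2b-\beta)\neq 0$. Moreover, for the Newton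 polyhedron $\Gamma_+(g)$ of the germ $(g,\mathbf 0)$ one has $\dim\Delta(P)=1$ and $g=g_{\Delta(P)}$, and $$ g^{-1}(0)\cap(\mathbb C^* )^2=\emptyset .$$ Consequently $(g,\mathbf 0)$ is Newton non-degenerate over $\Delta(P)$ but not strongly Newton non-degenerate over $\Delta(P)$.
   Context: A mixed polynomial is a finite sum $f(\mathbf z,\bar{\mathbf z})=\sum_{\nu,\mu}c_{\nu,\mu}\mathbf z^\nu\bar{\mathbf z}^\mu$ with $\nu,\mu\in\mathbb Z_+^n$, $\mathbf z^\nu=z_1^{\nu_1}\cdots z_n^{\nu_n}$, $\bar{\mathbf z}^\mu=\bar z_1^{\mu_1}\cdots\bar z_n^{\mu_n}$ (coefficients are unique); assume $f(\mathbf 0)=0$. A point $\mathbf a$ is a mixed critical point of $f$ if the real differential $df_{\mathbf a}:T_{\mathbf a}\mathbb C^n\to T_{f(\mathbf a)}\mathbb C\cong\mathbb R^2$ has rank $<2$. $f$ is radially weighted homogeneous with respect to $P={}^t(p_1,\dots,p_n)\in\mathbb Z_+^n\setminus\{0\}$ of radial degree $d_r>0$ if $c_{\nu,\mu}\ne0\Rightarrow\sum_i p_i(\nu_i+\mu_i)=d_r$; $f$ is polar weighted homogeneous with respect to $Q={}^t(q_1,\dots,q_n)\ne0$ of polar degree $d_p$ if $c_{\nu,\mu}\ne0\Rightarrow\sum_i q_i(\nu_i-\mu_i)=d_p$. A mixed weighted homogeneous polynomial is one that is both radially and polar weighted homogeneous (possibly with different weight vectors). The (radial) Newton polyhedron $\Gamma_+(f)$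 is the convex hull of $\bigcup_{c_{\nu,\mu}\neq0}\big((\nu+\mu)+\mathbb R_+^n\big)$. For $P\in\mathbb Z_+^n\setminus\{0\}$, $d(P)=\min_{\xi\in\Gamma_+(f)}\sum_j p_j\xi_j$ and the face $\Delta(P)=\{\xi\in\Gamma_+(f):\sum_jp_j\xi_j=d(P)\}$; $P$ is strictly positive if all $p_i>0$. For a compact face $\Delta$, the face function is $f_\Delta=\sum_{\nu+\mu\in\Delta}c_{\nu,\mu}\mathbf z^\nu\bar{\mathbf z}^\mu$. $(f,\mathbf 0)$ is Newton non-degenerate over a compact face $\Delta$ if $0$ is not a mixed critical value of $f_\Delta:(\mathbb C^* )^n\to\mathbb C$ (in particular this holds if $f_\Delta^{-1}(0)\cap(\mathbb C^* )^n=\emptyset$). For a compact face $\Delta$ with $\dim\Delta\ge1$, $(f,\mathbf 0)$ is strongly Newton non-degenerate over $\Delta$ if $f_\Delta:(\mathbb C^* )^n\to\mathbb C$ has no mixed critical points and is surjective onto $\mathbb C$. *)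

(* Defs.v *)
From HB Require Import structures.
From mathcomp Require Import all_boot all_order all_algebra.
From mathcomp Require Import all_classical all_reals all_analysis.
From mathcomp Require Import complex.
Set Implicit Arguments.
Unset Strict Implicit.
Unset Printing Implicit Defensive.
Import Order.TTheory GRing.Theory Num.Theory.
Import numFieldNormedType.Exports.
Local Open Scope ring_scope.
Local Open Scope classical_set_scope.

Definition expo (n : nat) := {ffun 'I_n -> nat}.

(* A mixed polynomial in n variables: a finite formal sum of terms
   c * z^nu * zbar^mu, given as a list of (c, (nu, mu)).  The (unique)
   coefficient c_{nu,mu} is obtained by collecting like terms. *)
Definition mixed_poly (R : realType) (n : nat) := seq (R[i] * (expo n * expo n)).

Definition mcoef (R : realType) n (f : mixed_poly R n) (nu mu : expo n) : R[i] :=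
  \sum_(t <- f | t.2 == (nu, mu)) t.1.

Definition meval (R : realType) n (f : mixed_poly R n) (z : 'I_n -> R[i]) : R[i] :=
  \sum_(t <- f) t.1 * \prod_(i < n) (z i ^+ t.2.1 i * conjc (z i) ^+ t.2.2 i).

Definition in_torus (R : realType) n (z : 'I_n -> R[i]) := forall i, z i != 0.

(* f viewed as a real map R^{2n} -> R^2, (x, y) |-> (Re f(x+iy), Im f(x+iy)) *)
Definition cplx_of_real (R : realType) n (x : 'rV[R]_(n + n)) : 'I_n -> R[i] :=
  fun i => Complex (x ord0 (lshift n i)) (x ord0 (rshift n i)).
Definition real_of_cplx (R : realType) n (z : 'I_n -> R[i]) : 'rV[R]_(n + n) :=
  \row_(j < n + n) match fintype.split j with inl i => complex.Re (z i) | inr i => complex.Im (z i) end.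
Definition real_map (R : realType) n (f : mixed_poly R n) : 'rV[R]_(n + n) -> 'rV[R]_2 :=
  fun x => let w := meval f (cplx_of_real x) in
           \row_(j < 2) (if val j == 0%N then complex.Re w else complex.Im w).

Definition mixed_critical (R : realType) n (f : mixed_poly R n) (a : 'I_n -> R[i]) :=
  (\rank (jacobian (real_map f) (real_of_cplx a)) < 2)%N.

Definition radially_wh (R : realType) n (f : mixed_poly R n) (P : 'I_n -> nat) (dr : nat) :=
  [/\ exists i, P i != 0%N, (0 < dr)%N &
      forall nu mu, mcoef f nu mu != 0 -> (\sum_(i < n) P i * (nu i + mu i))%N = dr].

Definition polar_wh (R : realType) n (f : mixed_poly R n) (Q : 'I_n -> int) (dp : int) :=
  (exists i, Q i != 0) /\
  forall nu mu, mcoef f nu mu != 0 ->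
    \sum_(i < n) Q i * ((nu i)%:Z - (mu i)%:Z) = dp.

Definition mixed_wh (R : realType) n (f : mixed_poly R n) :=
  exists P dr Q dp, radially_wh f P dr /\ polar_wh f Q dp.

Definition expo_pt (R : realType) n (nu mu : expo n) : 'rV[R]_n :=
  \row_(i < n) ((nu i + mu i)%:R).

Definition convex_hull (R : realType) n (S : set 'rV[R]_n) : set 'rV[R]_n :=
  [set x | exists (m : nat) (w : 'I_m -> R) (v : 'I_m -> 'rV[R]_n),
     [/\ forall j, 0 <= w j, \sum_(j < m) w j = 1, forall j, S (v j) &
         x = \sum_(j < m) w j *: v j]].

Definition newton_polyhedron (R : realType) n (f : mixed_poly R n) : set 'rV[R]_n :=
  convex_hull [set x | exists nu mu, mcoef f nu mu != 0 /\
                         exists r : 'rV[R]_n, (forall i, 0 <= r ord0 i) /\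
                                              x = expo_pt R nu mu + r].

Definition wdot (R : realType) n (P : 'I_n -> nat) (x : 'rV[R]_n) : R :=
  \sum_(i < n) (P i)%:R * x ord0 i.

Definition newton_face (R : realType) n (f : mixed_poly R n) (P : 'I_n -> nat) : set 'rV[R]_n :=
  [set x | newton_polyhedron f x /\
           forall y, newton_polyhedron f y -> wdot P x <= wdot P y].

(* S contains m+1 affinely independent points *)
Definition has_aff_indep (R : realType) n (S : set 'rV[R]_n) (m : nat) :=
  exists (x0 : 'rV[R]_n) (X : 'M[R]_(m, n)),
    [/\ S x0, forall i, S (x0 + row i X) & \rank X = m].

Definition aff_dim (R : realType) n (S : set 'rV[R]_n) (m : nat) :=
  has_aff_indep S m /\ ~ has_aff_indep S m.+1.

Definition face_fun (R : realType) n (f : mixed_poly R n) (D : set 'rV[R]_n) : mixed_poly R n :=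
  [seq t <- f | `[< D (expo_pt R t.2.1 t.2.2) >] ].

Definition newton_nondeg_over (R : realType) n (f : mixed_poly R n) (D : set 'rV[R]_n) :=
  ~ exists z, [/\ in_torus z, mixed_critical (face_fun f D) z & meval (face_fun f D) z = 0].

Definition strongly_newton_nondeg_over (R : realType) n (f : mixed_poly R n) (D : set 'rV[R]_n) :=
  (forall z, in_torus z -> ~ mixed_critical (face_fun f D) z) /\
  (forall w : R[i], exists z, in_torus z /\ meval (face_fun f D) z = w).

Definition ex2 (x y : nat) : expo 2 := [ffun i : 'I_2 => if val i == 0%N then x else y].
Definition w2 (T : Type) (x y : T) : 'I_2 -> T := fun i => if val i == 0%N then x else y.

Definition gpoly (R : realType) (al be ga de a a' b b' c c' d d' : nat) : mixed_poly R 2 :=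
  [:: (1, (ex2 a b, ex2 (al - a) (be - b)));
      (-1, (ex2 a' b', ex2 (al - a') (be - b')));
      (1, (ex2 c d, ex2 (ga - c) (de - d)));
      (1, (ex2 c' d', ex2 (ga - c') (de - d')))].

(* Main.v *)
Require Import Defs.
From HB Require Import structures.
From mathcomp Require Import all_boot all_order all_algebra.
From mathcomp Require Import all_classical all_reals all_analysis.
From mathcomp Require Import complex.
From mathcomp Require Import ring lra zify.
Import Order.TTheory GRing.Theory Num.Theory.
Local Open Scope ring_scope.


Lemma arith_plus {al a a' c c' ga : nat} : (a <= al)%N -> (a' <= al)%N -> (c <= ga)%N -> (c' <= ga)%N ->
 a%:Z - a'%:Z = c%:Z - c'%:Z ->
 2 * (a%:Z - c%:Z) - al%:Z + ga%:Z = a%:Z - a'%:Z ->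
 [/\ a%:Z - (al - a)%N%:Z = c'%:Z - (ga - c')%N%:Z + (a%:Z - a'%:Z) * (3%N)%:Z,
     a'%:Z - (al - a')%N%:Z = c'%:Z - (ga - c')%N%:Z + (a%:Z - a'%:Z) * (1%N)%:Z,
     c%:Z - (ga - c)%N%:Z = c'%:Z - (ga - c')%N%:Z + (a%:Z - a'%:Z) * (2%N)%:Z &
     c'%:Z - (ga - c')%N%:Z = c'%:Z - (ga - c')%N%:Z + (a%:Z - a'%:Z) * (0%N)%:Z].
Proof. move=> *; split; lia. Qed.

Lemma arith_minus {al a a' c c' ga : nat} : (a <= al)%N -> (a' <= al)%N -> (c <= ga)%N -> (c' <= ga)%N ->
 a%:Z - a'%:Z = c%:Z - c'%:Z ->
 2 * (a%:Z - c%:Z) - al%:Z + ga%:Z = - (a%:Z - a'%:Z) ->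
 [/\ a%:Z - (al - a)%N%:Z = a'%:Z - (al - a')%N%:Z + (a%:Z - a'%:Z) * (2%N)%:Z,
     a'%:Z - (al - a')%N%:Z = a'%:Z - (al - a')%N%:Z + (a%:Z - a'%:Z) * (0%N)%:Z,
     c%:Z - (ga - c)%N%:Z = a'%:Z - (al - a')%N%:Z + (a%:Z - a'%:Z) * (3%N)%:Z &
     c'%:Z - (ga - c')%N%:Z = a'%:Z - (al - a')%N%:Z + (a%:Z - a'%:Z) * (1%N)%:Z].
Proof. move=> *; split; lia. Qed.

Lemma arith_c {al a a' c c' ga : nat} : (a <= al)%N -> (a' <= al)%N -> (c <= ga)%N -> (c' <= ga)%N ->
 a%:Z - a'%:Z = c%:Z - c'%:Z ->
 (al - a')%N%:Z = (a%:Z - a'%:Z) + (al - a)%N%:Z /\ (ga - c')%N%:Z = (a%:Z - a'%:Z) + (ga - c)%N%:Z.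
Proof. move=> *; split; lia. Qed.

Section S.
Context {R : realType}.
Local Open Scope complex_scope.

Lemma pos_c (C : R[i]) : 0 < C -> exists c, 0 < c /\ C = c%:C.
Proof.
case: C => x y; rewrite ltcE /= => /andP[/eqP -> hx]; exists x; split => //.
Qed.

Lemma nz_c (x y : R) : x +i* y != 0 -> x != 0 \/ y != 0.
Proof.
case: (x =P 0) => [->|]; last by left; apply/eqP.
case: (y =P 0) => [->|]; last by right; apply/eqP.
by rewrite eqxx.
Qed.

Lemma core1 (Z C1 C3 : R[i]) : Z != 0 -> 0 < C1 -> 0 < C3 ->
  C1 * (Z ^+ 2 - Z * (conjc Z)) + C3 * (Z + (conjc Z)) != 0.
Proof.
move=> hZ /pos_c [c1 [h1 ->]] /pos_c [c3 [h3 ->]].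
move: hZ; case: Z => x y /nz_c hZ; apply/eqP => /eqP; rewrite eq_complex /=.
move=> /andP[/eqP e1 /eqP e2].
have hxy : x * y = 0.
  have : c1 * (x * y) = 0 by nra.
  by move/eqP; rewrite mulf_eq0 gt_eqF //= => /eqP.
case: hZ => /eqP; apply.
- move: hxy => /eqP; rewrite mulf_eq0 => /orP[/eqP //|/eqP hy].
  rewrite hy in e1; have : c3 * x = 0 by lra.
  by move/eqP; rewrite mulf_eq0 gt_eqF //= => /eqP.
- move: hxy => /eqP; rewrite mulf_eq0 => /orP[/eqP hx|/eqP //].
  rewrite hx in e1; have : c1 * (y * y) = 0 by lra.
  by move/eqP; rewrite mulf_eq0 gt_eqF //= mulf_eq0 orbb => /eqP.
Qed.

Lemma core2 (Z C1 C3 : R[i]) : Z != 0 -> 0 < C1 -> 0 < C3 ->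
  C1 * (Z - (conjc Z)) + C3 * (Z ^+ 2 + Z * (conjc Z)) != 0.
Proof.
move=> hZ /pos_c [c1 [h1 ->]] /pos_c [c3 [h3 ->]].
move: hZ; case: Z => x y /nz_c hZ; apply/eqP => /eqP; rewrite eq_complex /=.
move=> /andP[/eqP e1 /eqP e2].
have hx : x = 0.
  have : c3 * (x * x) = 0 by lra.
  by move/eqP; rewrite mulf_eq0 gt_eqF //= mulf_eq0 orbb => /eqP.
rewrite hx in e2; case: hZ => /eqP; apply => //.
have : c1 * y = 0 by lra.
by move/eqP; rewrite mulf_eq0 gt_eqF //= => /eqP.
Qed.

Lemma rho_gt0 (z : R[i]) : z != 0 -> 0 < z * (conjc z).
Proof.
move=> hz; rewrite lt_def mulcJ_ge0 andbT mulf_neq0 //.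
by rewrite conjc_eq0.
Qed.

Lemma mono_conv (z : R[i]) (n m : nat) : z != 0 ->
  z ^+ n * (conjc z) ^+ m = (z * (conjc z)) ^+ m * z ^ (n%:Z - m%:Z).
Proof.
move=> hz; have hc : (conjc z) = (z * (conjc z)) * z^-1 by field.
rewrite [in LHS]hc exprMn expfzDr // -exprz_inv.
rewrite -[z ^ n%:Z]/(z ^+ n) -[z^-1 ^ m%:Z]/(z^-1 ^+ m); ring.
Qed.

Definition T (z1 z2 : R[i]) n1 m1 n2 m2 := z1 ^+ n1 * (conjc z1) ^+ m1 * (z2 ^+ n2 * (conjc z2) ^+ m2).

Lemma term_form (z1 z2 : R[i]) n1 m1 n2 m2 (e f Da Db : int) (j : nat) :
  z1 != 0 -> z2 != 0 -> n1%:Z - m1%:Z = e + Da * j%:Z -> n2%:Z - m2%:Z = f + Db * j%:Z ->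
  T z1 z2 n1 m1 n2 m2 = ((z1 * (conjc z1)) ^+ m1 * (z2 * (conjc z2)) ^+ m2) *
     ((z1 ^ e * z2 ^ f) * (z1 ^ Da * z2 ^ Db) ^+ j).
Proof.
move=> h1 h2 e1 e2; rewrite /T !mono_conv // e1 e2 !expfzDr // -!exprz_exp.
rewrite -[(z1 ^ Da) ^ j%:Z]/((z1 ^ Da) ^+ j) -[(z2 ^ Db) ^ j%:Z]/((z2 ^ Db) ^+ j).
rewrite [(z1 ^ Da * z2 ^ Db) ^+ j]exprMn; ring.
Qed.

Lemma kappa_eq (z1 z2 : R[i]) (Da Db : int) : z1 != 0 -> z2 != 0 ->
  (z1 ^ Da * z2 ^ Db) * (conjc (z1 ^ Da * z2 ^ Db)) = (z1 * (conjc z1)) ^ Da * (z2 * (conjc z2)) ^ Db.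
Proof.
move=> h1 h2; rewrite rmorphM /= !(fmorphXz (@conjc R : {rmorphism R[i] -> R[i]})).
rewrite !expfzMl.
move: (z1 ^ Da) (z2 ^ Db) (conjc z1 ^ Da) (conjc z2 ^ Db) => A B C D; ring.
Qed.

Lemma crel (r1 r2 : R[i]) m1 m2 m1' m2' (Da Db : int) : r1 != 0 -> r2 != 0 ->
  m1'%:Z = Da + m1%:Z -> m2'%:Z = Db + m2%:Z ->
  r1 ^+ m1' * r2 ^+ m2' = (r1 ^ Da * r2 ^ Db) * (r1 ^+ m1 * r2 ^+ m2).
Proof.
move=> h1 h2 e1 e2.
rewrite -[r1 ^+ m1']/(r1 ^ m1'%:Z) -[r2 ^+ m2']/(r2 ^ m2'%:Z) e1 e2 !expfzDr //.
rewrite -[r1 ^ m1%:Z]/(r1 ^+ m1) -[r2 ^ m2%:Z]/(r2 ^+ m2); ring.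
Qed.

Lemma meval_g al be ga de a a' b b' c c' d d' (z : 'I_2 -> R[i]) :
  meval (gpoly R al be ga de a a' b b' c c' d d') z =
  T (z ord0) (z (lift ord0 ord0)) a (al - a) b (be - b)
  - T (z ord0) (z (lift ord0 ord0)) a' (al - a') b' (be - b')
  + T (z ord0) (z (lift ord0 ord0)) c (ga - c) d (de - d)
  + T (z ord0) (z (lift ord0 ord0)) c' (ga - c') d' (de - d').
Proof.
rewrite /meval /gpoly !big_cons big_nil /= !big_ord_recl !big_ord0 /= !ffunE /= /T.
by rewrite !mul1r mulN1r !mulr1 addr0 !addrA.
Qed.

Lemma g_nonzero {al be ga de a a' b b' c c' d d' : nat} {z : 'I_2 -> R[i]} :
 (a <= al)%N -> (a' <= al)%N -> (b <= be)%N -> (b' <= be)%N ->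
 (c <= ga)%N -> (c' <= ga)%N -> (d <= de)%N -> (d' <= de)%N ->
 (a%:Z - a'%:Z, b%:Z - b'%:Z) = (c%:Z - c'%:Z, d%:Z - d'%:Z) ->
 (let v := (2 * (a%:Z - c%:Z) - al%:Z + ga%:Z, 2 * (b%:Z - d%:Z) - be%:Z + de%:Z) in
          v = (a%:Z - a'%:Z, b%:Z - b'%:Z) \/ v = (- (a%:Z - a'%:Z), - (b%:Z - b'%:Z))) ->
 in_torus z -> meval (gpoly R al be ga de a a' b b' c c' d d') z != 0.
Proof.
move=> Ha Ha' Hb Hb' Hc Hc' Hd Hd' [h3a h3b] H4 hz.
rewrite meval_g.
have [eA eC] := arith_c Ha Ha' Hc Hc' h3a.
have [eB eD] := arith_c Hb Hb' Hd Hd' h3b.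
have h1 := hz ord0; have h2 := hz (lift ord0 ord0).
move: (z ord0) (z (lift ord0 ord0)) h1 h2 => z1 z2 h1 h2.
have r1 := rho_gt0 z1 h1; have r2 := rho_gt0 z2 h2.
have r1n : z1 * conjc z1 != 0 by rewrite gt_eqF.
have r2n : z2 * conjc z2 != 0 by rewrite gt_eqF.
have hZ : z1 ^ (a%:Z - a'%:Z) * z2 ^ (b%:Z - b'%:Z) != 0 by rewrite mulf_neq0 // expfz_neq0.
have hK := kappa_eq z1 z2 (a%:Z - a'%:Z) (b%:Z - b'%:Z) h1 h2.
have C2 := @crel _ _ (al - a) (be - b) (al - a') (be - b') (a%:Z - a'%:Z) (b%:Z - b'%:Z) r1n r2n eA eB.
have C4 := @crel _ _ (ga - c) (de - d) (ga - c') (de - d') (a%:Z - a'%:Z) (b%:Z - b'%:Z) r1n r2n eC eD.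
have P1 : 0 < (z1 * conjc z1) ^+ (al - a) * (z2 * conjc z2) ^+ (be - b) by rewrite mulr_gt0 // exprn_gt0.
have P3 : 0 < (z1 * conjc z1) ^+ (ga - c) * (z2 * conjc z2) ^+ (de - d) by rewrite mulr_gt0 // exprn_gt0.
case: H4 => -[h4a h4b].
- have [p1 p2 p3 p4] := arith_plus Ha Ha' Hc Hc' h3a h4a.
  have [q1 q2 q3 q4] := arith_plus Hb Hb' Hd Hd' h3b h4b.
  rewrite (@term_form z1 z2 _ _ _ _ (c'%:Z - (ga - c')%:Z) (d'%:Z - (de - d')%:Z) (a%:Z - a'%:Z) (b%:Z - b'%:Z) 3 h1 h2 p1 q1).
  rewrite (@term_form z1 z2 _ _ _ _ (c'%:Z - (ga - c')%:Z) (d'%:Z - (de - d')%:Z) (a%:Z - a'%:Z) (b%:Z - b'%:Z) 1 h1 h2 p2 q2).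
  rewrite (@term_form z1 z2 _ _ _ _ (c'%:Z - (ga - c')%:Z) (d'%:Z - (de - d')%:Z) (a%:Z - a'%:Z) (b%:Z - b'%:Z) 2 h1 h2 p3 q3).
  rewrite (@term_form z1 z2 _ _ _ _ (c'%:Z - (ga - c')%:Z) (d'%:Z - (de - d')%:Z) (a%:Z - a'%:Z) (b%:Z - b'%:Z) 0 h1 h2 p4 q4).
  rewrite C2 C4 -hK.
  have hB : z1 ^ (c'%:Z - (ga - c')%:Z) * z2 ^ (d'%:Z - (de - d')%:Z) != 0 by rewrite mulf_neq0 // expfz_neq0.
  have := @core1 _ _ _ hZ P1 P3.
  move: hB hZ P1 P3.
  move: (z1 ^ (c'%:Z - (ga - c')%:Z) * z2 ^ (d'%:Z - (de - d')%:Z)) (z1 ^ (a%:Z - a'%:Z) * z2 ^ (b%:Z - b'%:Z))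
    ((z1 * conjc z1) ^+ (al - a) * (z2 * conjc z2) ^+ (be - b))
    ((z1 * conjc z1) ^+ (ga - c) * (z2 * conjc z2) ^+ (de - d)) => B Z C1 C3 hB hZ' _ _ hc.
  have -> : C1 * (B * Z ^+ 3) - Z * conjc Z * C1 * (B * Z ^+ 1) + C3 * (B * Z ^+ 2) +
     Z * conjc Z * C3 * (B * Z ^+ 0) = B * Z * (C1 * (Z ^+ 2 - Z * conjc Z) + C3 * (Z + conjc Z)).
    move: (conjc Z) => W; ring.
  by rewrite !mulf_neq0.
- have [p1 p2 p3 p4] := arith_minus Ha Ha' Hc Hc' h3a h4a.
  have [q1 q2 q3 q4] := arith_minus Hb Hb' Hd Hd' h3b h4b.
  rewrite (@term_form z1 z2 _ _ _ _ (a'%:Z - (al - a')%:Z) (b'%:Z - (be - b')%:Z) (a%:Z - a'%:Z) (b%:Z - b'%:Z) 2 h1 h2 p1 q1).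
  rewrite (@term_form z1 z2 _ _ _ _ (a'%:Z - (al - a')%:Z) (b'%:Z - (be - b')%:Z) (a%:Z - a'%:Z) (b%:Z - b'%:Z) 0 h1 h2 p2 q2).
  rewrite (@term_form z1 z2 _ _ _ _ (a'%:Z - (al - a')%:Z) (b'%:Z - (be - b')%:Z) (a%:Z - a'%:Z) (b%:Z - b'%:Z) 3 h1 h2 p3 q3).
  rewrite (@term_form z1 z2 _ _ _ _ (a'%:Z - (al - a')%:Z) (b'%:Z - (be - b')%:Z) (a%:Z - a'%:Z) (b%:Z - b'%:Z) 1 h1 h2 p4 q4).
  rewrite C2 C4 -hK.
  have hB : z1 ^ (a'%:Z - (al - a')%:Z) * z2 ^ (b'%:Z - (be - b')%:Z) != 0 by rewrite mulf_neq0 // expfz_neq0.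
  have := @core2 _ _ _ hZ P1 P3.
  move: hB hZ P1 P3.
  move: (z1 ^ (a'%:Z - (al - a')%:Z) * z2 ^ (b'%:Z - (be - b')%:Z)) (z1 ^ (a%:Z - a'%:Z) * z2 ^ (b%:Z - b'%:Z))
    ((z1 * conjc z1) ^+ (al - a) * (z2 * conjc z2) ^+ (be - b))
    ((z1 * conjc z1) ^+ (ga - c) * (z2 * conjc z2) ^+ (de - d)) => B Z C1 C3 hB hZ' _ _ hc.
  have -> : C1 * (B * Z ^+ 2) - Z * conjc Z * C1 * (B * Z ^+ 0) + C3 * (B * Z ^+ 3) +
     Z * conjc Z * C3 * (B * Z ^+ 1) = B * Z * (C1 * (Z - conjc Z) + C3 * (Z ^+ 2 + Z * conjc Z)).
    move: (conjc Z) => W; ring.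
  by rewrite !mulf_neq0.
Qed.
End S.
Section N.
Context {R : realType}.

Lemma wdot_ept n (P : 'I_n -> nat) nu mu :
  wdot P (expo_pt R nu mu) = (\sum_(i < n) P i * (nu i + mu i))%N%:R.
Proof. by rewrite /wdot /expo_pt natr_sum; apply eq_bigr => i _; rewrite mxE natrM. Qed.

Lemma wdotD n (P : 'I_n -> nat) (x y : 'rV[R]_n) : wdot P (x + y) = wdot P x + wdot P y.
Proof. by rewrite /wdot -big_split; apply eq_bigr => i _; rewrite mxE mulrDr. Qed.

Lemma wdotN n (P : 'I_n -> nat) (x : 'rV[R]_n) : wdot P (- x) = - wdot P x.
Proof. by rewrite /wdot -sumrN; apply eq_bigr => i _; rewrite mxE mulrN. Qed.

Lemma wdot_sum n (P : 'I_n -> nat) m (w : 'I_m -> R) (v : 'I_m -> 'rV[R]_n) :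
  wdot P (\sum_(j < m) w j *: v j) = \sum_(j < m) w j * wdot P (v j).
Proof.
rewrite /wdot; under eq_bigr => i _ do rewrite summxE big_distrr /=.
rewrite exchange_big /=; apply eq_bigr => j _; rewrite big_distrr /=.
by apply eq_bigr => i _; rewrite mxE mulrCA.
Qed.

Lemma wdot_ge0 n (P : 'I_n -> nat) (r : 'rV[R]_n) : (forall i, 0 <= r ord0 i) -> 0 <= wdot P r.
Proof. by move=> h; apply: sumr_ge0 => i _; rewrite mulr_ge0. Qed.

Lemma poly_ge n (f : mixed_poly R n) (P : 'I_n -> nat) (dr : nat) :
  (forall nu mu, mcoef f nu mu != 0 -> (\sum_(i < n) P i * (nu i + mu i))%N = dr) ->
  forall x, newton_polyhedron f x -> dr%:R <= wdot P x.
Proof.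
move=> hrad x [m [w [v [hw hs hv ->]]]].
rewrite wdot_sum.
have -> : (dr%:R : R) = \sum_(j < m) w j * dr%:R by rewrite -mulr_suml hs mul1r.
apply: ler_sum => j _; apply: ler_wpM2l => //.
have [nu [mu [hnz [r [hr ->]]]]] := hv j.
by rewrite wdotD wdot_ept hrad // lerDl wdot_ge0.
Qed.

Lemma hull_pt {n} {f : mixed_poly R n} {nu mu} : mcoef f nu mu != 0 ->
  newton_polyhedron f (expo_pt R nu mu).
Proof.
move=> hnz; exists 1%N, (fun _ => 1), (fun _ => expo_pt R nu mu); split.
- by move=> j; rewrite ler01.
- by rewrite big_ord_recl big_ord0 addr0.
- by move=> j; exists nu, mu; split => //; exists 0; split; [move=> i; rewrite mxE | rewrite addr0].
- by rewrite big_ord_recl big_ord0 addr0 scale1r.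
Qed.

Lemma face_char {n} {f : mixed_poly R n} {P : 'I_n -> nat} {dr : nat} {nu0 mu0} :
  (forall nu mu, mcoef f nu mu != 0 -> (\sum_(i < n) P i * (nu i + mu i))%N = dr) ->
  mcoef f nu0 mu0 != 0 ->
  forall x, newton_face f P x <-> newton_polyhedron f x /\ wdot P x = dr%:R.
Proof.
move=> hrad h0 x; split.
- move=> [hx hmin]; split => //; apply/eqP; rewrite eq_le (@poly_ge _ _ _ _ hrad _ hx) andbT.
  have := hmin _ (@hull_pt _ _ _ _ h0); rewrite wdot_ept hrad //.
- move=> [hx he]; split => // y hy; rewrite he; exact: (@poly_ge _ _ _ _ hrad _ hy).
Qed.

Lemma ex2_inj x y x' y' : ex2 x y = ex2 x' y' -> x = x' /\ y = y'.
Proof.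
move=> e; have := congr1 (fun f : expo 2 => f ord0) e.
have := congr1 (fun f : expo 2 => f (lift ord0 ord0)) e.
by rewrite !ffunE /= => -> ->.
Qed.

Lemma ept2 {x y X Y} : (x <= X)%N -> (y <= Y)%N ->
  expo_pt R (ex2 x y) (ex2 (X - x) (Y - y)) = expo_pt R (ex2 X Y) (ex2 0 0).
Proof.
move=> hx hy; apply/rowP => i; rewrite !mxE !ffunE.
by case: ifP => _; rewrite ?subnKC // addn0.
Qed.


Lemma aff_dim1 {S : set 'rV[R]_2} {P : 'I_2 -> nat} {dr : R} {V1 V3} :
  S V1 -> S V3 -> V1 != V3 -> (forall x, S x -> wdot P x = dr) -> (0 < P ord0)%N -> aff_dim S 1.
Proof.
move=> h1 h3 hne hw hP; split.
- exists V1, (V3 - V1); split => //.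
  + move=> i; have -> : row i (V3 - V1) = V3 - V1.
      by apply/rowP => j; rewrite mxE (ord1 i).
    by rewrite addrC subrK.
  + by rewrite rank_rV subr_eq0 eq_sym hne.
- case=> x0 [X [hx0 hX hr]].
  have hrow : forall i, wdot P (row i X) = 0.
    by move=> i; have := hw _ (hX i); rewrite wdotD hw // => e; apply: (addrI dr); rewrite addr0.
  pose pc : 'cV[R]_2 := \col_j (P j)%:R.
  have hXp : X *m pc = 0.
    apply/colP => i; rewrite !mxE -[RHS](hrow i) /wdot; apply eq_bigr => j _.
    by rewrite !mxE mulrC.
  have hu : X \in unitmx by rewrite -row_free_unit /row_free hr.
  have : pc = 0 by rewrite -(mulKmx hu pc) hXp mulmx0.
  move/colP => /(_ ord0); rewrite !mxE => /eqP; rewrite pnatr_eq0.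
  by move/eqP => e; move: hP; rewrite e.
Qed.
End N.

Lemma radial_arith {p1 p2 ga al de be : nat} :
  p1%:Z * (ga%:Z - al%:Z) + p2%:Z * (de%:Z - be%:Z) = 0 ->
  (p1 * ga + p2 * de = p1 * al + p2 * be)%N.
Proof. move=> *; lia. Qed.

Lemma ne_arith {al ga a c : nat} : (al < ga)%N -> (a <= al)%N -> (c <= ga)%N -> c = a -> (ga - c)%N = (al - a)%N -> False.
Proof. move=> *; lia. Qed.

Lemma hD_arith {a a' b b' : nat} {q1 q2 k : int} : k != 0 -> (q1 != 0) || (q2 != 0) ->
  a%:Z - a'%:Z = q2 * k -> b%:Z - b'%:Z = - (q1 * k) -> a' = a -> b' = b -> False.
Proof.
move=> hk hq e1 e2 ea eb; move: e1 e2; rewrite ea eb !subrr => /esym/eqP e1 /esym/eqP.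
rewrite oppr_eq0 => e2; move: e1 e2; rewrite !mulf_eq0 (negbTE hk) !orbF => /eqP e1 /eqP e2.
by move: hq; rewrite e1 e2 eqxx.
Qed.

Lemma polar_vals {q1 q2 k : int} {a a' b b' c c' d d' al be ga de : nat} :
  (a <= al)%N -> (a' <= al)%N -> (b <= be)%N -> (b' <= be)%N ->
  (c <= ga)%N -> (c' <= ga)%N -> (d <= de)%N -> (d' <= de)%N ->
  a%:Z - a'%:Z = q2 * k -> b%:Z - b'%:Z = - (q1 * k) ->
  (a%:Z - a'%:Z, b%:Z - b'%:Z) = (c%:Z - c'%:Z, d%:Z - d'%:Z) ->
  (let v := (2 * (a%:Z - c%:Z) - al%:Z + ga%:Z, 2 * (b%:Z - d%:Z) - be%:Z + de%:Z) in
          v = (a%:Z - a'%:Z, b%:Z - b'%:Z) \/ v = (- (a%:Z - a'%:Z), - (b%:Z - b'%:Z))) ->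
  let dp := q1 * (2 * a%:Z - al%:Z) + q2 * (2 * b%:Z - be%:Z) in
  [/\ q1 * (a%:Z - (al - a)%N%:Z) + q2 * (b%:Z - (be - b)%N%:Z) = dp,
      q1 * (a'%:Z - (al - a')%N%:Z) + q2 * (b'%:Z - (be - b')%N%:Z) = dp,
      q1 * (c%:Z - (ga - c)%N%:Z) + q2 * (d%:Z - (de - d)%N%:Z) = dp &
      q1 * (c'%:Z - (ga - c')%N%:Z) + q2 * (d'%:Z - (de - d')%N%:Z) = dp].
Proof.
move=> Ha Ha' Hb Hb' Hc Hc' Hd Hd' H2a H2b [h3a h3b] H4 dp.
have s1 : ((al - a)%N : int) = al%:Z - a%:Z by lia.
have s2 : ((al - a')%N : int) = al%:Z - a'%:Z by lia.
have s3 : ((be - b)%N : int) = be%:Z - b%:Z by lia.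
have s4 : ((be - b')%N : int) = be%:Z - b'%:Z by lia.
have s5 : ((ga - c)%N : int) = ga%:Z - c%:Z by lia.
have s6 : ((ga - c')%N : int) = ga%:Z - c'%:Z by lia.
have s7 : ((de - d)%N : int) = de%:Z - d%:Z by lia.
have s8 : ((de - d')%N : int) = de%:Z - d'%:Z by lia.
rewrite s1 s2 s3 s4 s5 s6 s7 s8.
have hX : q1 * (a%:Z - a'%:Z) + q2 * (b%:Z - b'%:Z) = 0 by rewrite H2a H2b; ring.
have hY : q1 * (2 * (a%:Z - c%:Z) - al%:Z + ga%:Z) + q2 * (2 * (b%:Z - d%:Z) - be%:Z + de%:Z) = 0.
  case: H4 => -[-> ->]; first exact: hX.
  by rewrite -oppr0 -hX; ring.
have ec : c'%:Z = c%:Z - (a%:Z - a'%:Z) by rewrite h3a; ring.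
have ed : d'%:Z = d%:Z - (b%:Z - b'%:Z) by rewrite h3b; ring.
have ea : a'%:Z = a%:Z - (a%:Z - a'%:Z) by ring.
have eb : b'%:Z = b%:Z - (b%:Z - b'%:Z) by ring.
move: hX hY ec ed ea eb; rewrite /dp.
move: (a%:Z - a'%:Z) (b%:Z - b'%:Z) => Da Db hX hY ec ed ea eb.
split.
- ring.
- apply/eqP; rewrite -subr_eq0; apply/eqP; rewrite ea eb.
  transitivity (-2 * (q1 * Da + q2 * Db)); first ring.
  by rewrite hX; ring.
- apply/eqP; rewrite -subr_eq0; apply/eqP.
  transitivity (- (q1 * (2 * (a%:Z - c%:Z) - al%:Z + ga%:Z) + q2 * (2 * (b%:Z - d%:Z) - be%:Z + de%:Z))); first ring.
  by rewrite hY; ring.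
- apply/eqP; rewrite -subr_eq0; apply/eqP; rewrite ec ed.
  transitivity (- (q1 * (2 * (a%:Z - c%:Z) - al%:Z + ga%:Z) + q2 * (2 * (b%:Z - d%:Z) - be%:Z + de%:Z))
     - 2 * (q1 * Da + q2 * Db)); first ring.
  by rewrite hY hX; ring.
Qed.

Lemma face_fun_id {R : realType} {n} {f : mixed_poly R n} {D : set 'rV[R]_n} :
  (forall t, t \in f -> D (expo_pt R t.2.1 t.2.2)) -> face_fun f D = f.
Proof.
move=> h; rewrite /face_fun; apply/all_filterP; apply/allP => t ht; apply/asboolP; exact: h.
Qed.

Theorem mainTheorem1 (R : realType)
    (al be ga de a a' b b' c c' d d' p1 p2 : nat) (q1 q2 k : int)
    (Hag : (al < ga)%N) (Hdb : (de < be)%N)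
    (Ha : (a <= al)%N) (Ha' : (a' <= al)%N) (Hb : (b <= be)%N) (Hb' : (b' <= be)%N)
    (Hc : (c <= ga)%N) (Hc' : (c' <= ga)%N) (Hd : (d <= de)%N) (Hd' : (d' <= de)%N)
    (Hp1 : (0 < p1)%N) (Hp2 : (0 < p2)%N)
    (Hq1 : 0 <= q1) (Hq2 : 0 <= q2) (HQ : (q1 != 0) || (q2 != 0))
    (H1 : p1%:Z * (ga%:Z - al%:Z) + p2%:Z * (de%:Z - be%:Z) = 0)
    (Hk : k != 0)
    (H2a : a%:Z - a'%:Z = q2 * k) (H2b : b%:Z - b'%:Z = - (q1 * k))
    (H3 : (a%:Z - a'%:Z, b%:Z - b'%:Z) = (c%:Z - c'%:Z, d%:Z - d'%:Z))
    (H4 : let v := (2 * (a%:Z - c%:Z) - al%:Z + ga%:Z, 2 * (b%:Z - d%:Z) - be%:Z + de%:Z) in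
          v = (a%:Z - a'%:Z, b%:Z - b'%:Z) \/ v = (- (a%:Z - a'%:Z), - (b%:Z - b'%:Z)))
    (H5 : q1 * (2 * a%:Z - al%:Z) + q2 * (2 * b%:Z - be%:Z) != 0) :
  let g := gpoly R al be ga de a a' b b' c c' d d' in
  let P := w2 p1 p2 in
  let Q := w2 q1 q2 in
  let dr := (p1 * al + p2 * be)%N in
  let dp := q1 * (2 * a%:Z - al%:Z) + q2 * (2 * b%:Z - be%:Z) in
  [/\ mixed_wh g /\
      radially_wh g P dr /\ dr = (p1 * ga + p2 * de)%N /\ (0 < dr)%N,
      polar_wh g Q dp /\ dp != 0,
      aff_dim (newton_face g P) 1 /\
        (forall nu mu, mcoef g nu mu = mcoef (face_fun g (newton_face g P)) nu mu),
      (forall z, in_torus z -> meval g z != 0) &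
      newton_nondeg_over g (newton_face g P) /\
      ~ strongly_newton_nondeg_over g (newton_face g P)].
Proof.
move=> g P Q dr dp.
have hdr : (p1 * ga + p2 * de = p1 * al + p2 * be)%N := radial_arith H1.
have [p3 p4 p5 p6] := polar_vals Ha Ha' Hb Hb' Hc Hc' Hd Hd' H2a H2b H3 H4.
have hgnz : forall z, in_torus z -> meval g z != 0.
  by move=> z hz; apply: (g_nonzero Ha Ha' Hb Hb' Hc Hc' Hd Hd' H3 H4 hz).
pose k1 := (ex2 a b, ex2 (al - a) (be - b)).
pose k2 := (ex2 a' b', ex2 (al - a') (be - b')).
pose k3 := (ex2 c d, ex2 (ga - c) (de - d)).
pose k4 := (ex2 c' d', ex2 (ga - c') (de - d')).
have hkeys : forall nu mu, mcoef g nu mu != 0 ->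
    [\/ (nu, mu) = k1, (nu, mu) = k2, (nu, mu) = k3 | (nu, mu) = k4].
  move=> nu mu h.
  have [e|n1] := eqVneq k1 (nu, mu); first by constructor 1.
  have [e|n2] := eqVneq k2 (nu, mu); first by constructor 2.
  have [e|n3] := eqVneq k3 (nu, mu); first by constructor 3.
  have [e|n4] := eqVneq k4 (nu, mu); first by constructor 4.
  move: h; rewrite /mcoef /g /gpoly !big_cons big_nil.
  by rewrite (negbTE n1) (negbTE n2) (negbTE n3) (negbTE n4) eqxx.
have [e1 e2] := H3.
have n21 : (k2 == k1) = false.
  apply/eqP => -[/ex2_inj [ea eb] _]; exact: (hD_arith Hk HQ H2a H2b ea eb).
have n31 : (k3 == k1) = false.
  by apply/eqP => -[/ex2_inj [ea _] /ex2_inj [ea' _]]; apply: (ne_arith Hag Ha Hc ea ea').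
have n41 : (k4 == k1) = false.
  by apply/eqP => -[/ex2_inj [ea _] /ex2_inj [ea' _]]; apply: (ne_arith Hag Ha Hc' ea ea').
have n23 : (k2 == k3) = false.
  by apply/eqP => -[/ex2_inj [ea _] /ex2_inj [ea' _]]; apply: (ne_arith Hag Ha' Hc (esym ea) (esym ea')).
have n43 : (k4 == k3) = false.
  apply/eqP => -[/ex2_inj [ea eb] _].
  have ea2 : a' = a.
    have : a%:Z - a'%:Z = 0 by rewrite e1 ea subrr.
    by move/eqP; rewrite subr_eq0 eqz_nat => /eqP.
  have eb2 : b' = b.
    have : b%:Z - b'%:Z = 0 by rewrite e2 eb subrr.
    by move/eqP; rewrite subr_eq0 eqz_nat => /eqP.
  exact: (hD_arith Hk HQ H2a H2b ea2 eb2).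
have hk1 : mcoef g k1.1 k1.2 = 1.
  rewrite /mcoef /g /gpoly !big_cons big_nil.
  by rewrite eqxx n21 n31 n41 addr0.
have hk3 : mcoef g k3.1 k3.2 = 1.
  rewrite /mcoef /g /gpoly !big_cons big_nil.
  by rewrite eqxx n23 n43 eq_sym n31 addr0.
have hrad : forall nu mu, mcoef g nu mu != 0 ->
    (\sum_(i < 2) P i * (nu i + mu i))%N = dr.
  move=> nu mu /hkeys [] [-> ->]; rewrite !big_ord_recl big_ord0 /= !ffunE /P /w2 /= addn0;
    rewrite !subnKC // /dr -?hdr //.
have hpol : forall nu mu, mcoef g nu mu != 0 ->
    \sum_(i < 2) Q i * ((nu i)%:Z - (mu i)%:Z) = dp.
  move=> nu mu /hkeys [] [-> ->]; rewrite !big_ord_recl big_ord0 /= !ffunE /Q /w2 /= addr0 //.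
have hk1nz : mcoef g k1.1 k1.2 != 0 by rewrite hk1 oner_neq0.
have hk3nz : mcoef g k3.1 k3.2 != 0 by rewrite hk3 oner_neq0.
have hface := face_char hrad hk1nz.
pose V1 := expo_pt R (ex2 al be) (ex2 0 0).
pose V3 := expo_pt R (ex2 ga de) (ex2 0 0).
have hV1 : newton_face g P V1.
  apply/hface; rewrite /V1 -(@ept2 R _ _ _ _ Ha Hb); split; first exact: hull_pt hk1nz.
  by rewrite wdot_ept (hrad _ _ hk1nz).
have hV3 : newton_face g P V3.
  apply/hface; rewrite /V3 -(@ept2 R _ _ _ _ Hc Hd); split; first exact: hull_pt hk3nz.
  by rewrite wdot_ept (hrad _ _ hk3nz).
have inface : forall t, t \in g -> newton_face g P (expo_pt R t.2.1 t.2.2).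
  move=> t; rewrite !inE => /orP [/eqP ->|/orP [/eqP ->|/orP [/eqP ->|/eqP ->]]] /=.
  - by rewrite (@ept2 R _ _ _ _ Ha Hb).
  - by rewrite (@ept2 R _ _ _ _ Ha' Hb').
  - by rewrite (@ept2 R _ _ _ _ Hc Hd).
  - by rewrite (@ept2 R _ _ _ _ Hc' Hd').
have hff : face_fun g (newton_face g P) = g := face_fun_id inface.
have hw : forall x, newton_face g P x -> wdot P x = dr%:R by move=> x /hface [].
have hne : V1 != V3.
  apply/negP => /eqP /rowP /(_ ord0); rewrite !mxE !ffunE /= !addn0 => /eqP.
  by rewrite eqr_nat ltn_eqF.
have hrw : radially_wh g P dr.
  split => //; first by exists ord0; rewrite /P /w2 /= -lt0n.
  by rewrite /dr addn_gt0 !muln_gt0 Hp2 (leq_ltn_trans (leq0n de) Hdb) orbT.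
have hpw : polar_wh g Q dp.
  split => //; case/orP: HQ => hq; [exists ord0 | exists (lift ord0 ord0)]; by rewrite /Q /w2.
split.
- split; first by exists P, dr, Q, dp.
  split => //; split; first by rewrite /dr hdr.
  by case: hrw.
- by split.
- split; last by move=> nu mu; rewrite hff.
  by apply: (aff_dim1 hV1 hV3 hne hw); rewrite /P /w2.
- exact: hgnz.
- split.
  + by rewrite /newton_nondeg_over hff => -[z [hz _ h0]]; move: (hgnz z hz); rewrite h0 eqxx.
  + rewrite /strongly_newton_nondeg_over hff => -[_ /(_ 0) [z [hz h0]]].
    by move: (hgnz z hz); rewrite h0 eqxx.
Qed.
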